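(* A deformation $\mathbf{y}\in H^1(\Omega;\mathbb{R}^3)$ satisfies $\nabla\mathbf{y}^T\nabla\mathbf{y}=g$ a.e. in $\Omega$ (i.e. $\mathbf{y}$ is an isometric immersion of $g$), where $$g=\lambda^2\,\mathbf{m}\otimes\mathbf{m}+\lambda^{-1}\,\mathbf{m}_\perp\otimes\mathbf{m}_\perp,$$ if and only if $\mathbf{y}$ is a global minimizer of $E_{str}$ over $H^1(\Omega;\mathbb{R}^3)$ with $E_{str}[\mathbf{y}]=0$.
   Context: Let $\Omega\subset\mathbb{R}^2$ be a bounded Lipschitz domain, $s,s_0\in L^\infty(\Omega)$ with $-1<s,s_0$ in $\Omega$, $\lambda=\big(\tfrac{s+1}{s_0+1}\big)^{1/3}$, $\mathbf{m}:\Omega\to\mathbb{S}^1$ the blueprinted director field and $\mathbf{m}_\perp:\Omega\to\mathbb{S}^1$ a field perpendicular to $\mathbf{m}$ everywhere. For $\mathbf{x}'\in\Omega$ and $\mathbf{F}\in\mathbb{R}^{3\times2}$ of rank 2, let $\mathrm{I}(\mathbf{F})=\mathbf{F}^T\mathbf{F}$, $J(\mathbf{F})=\det\mathrm{I}(\mathbf{F})$, $C_{\mathbf{m}}(\mathbf{F})=\mathbf{m}(\mathbf{x}')\cdot\mathrm{I}(\mathbf{F})\mathbf{m}(\mathbf{x}')$, and $$W_{str}(\mathbf{x}',\mathbf{F})=\lambda\Big[\frac{1}{J(\mathbf{F})}+\frac{1}{s+1}\Big(\operatorname{tr}\mathrm{I}(\mathbf{F})+s_0\,C_{\mathbf{m}}(\mathbf{F})+s\,\frac{J(\mathbf{F})}{C_{\mathbf{m}}(\mathbf{F})}\Big)\Big]-3,$$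 with $s,s_0,\lambda$ evaluated at $\mathbf{x}'$. The stretching energy is $E_{str}[\mathbf{y}]=\int_\Omega W_{str}(\mathbf{x}',\nabla\mathbf{y}(\mathbf{x}'))\,d\mathbf{x}'$ for $\mathbf{y}\in H^1(\Omega;\mathbb{R}^3)$. *)

(* Defs.v *)
From HB Require Import structures.
From mathcomp Require Import all_boot all_order all_algebra.
From mathcomp Require Import all_classical all_reals all_analysis.
Set Implicit Arguments. Unset Strict Implicit. Unset Printing Implicit Defensive.
Import Order.TTheory GRing.Theory Num.Theory.
Import numFieldNormedType.Exports.
Local Open Scope classical_set_scope.
Local Open Scope ring_scope.

Definition leb2 (R : realType) := ((@lebesgue_measure R) \x (@lebesgue_measure R))%E.
Arguments leb2 : clear implicits.

(** Bounded Lipschitz domain in R^2: open, connected, bounded, and near every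
    boundary point, in suitable rotated coordinates, the domain is the
    (strict) supergraph of a Lipschitz function inside a box. *)
Definition lipschitz_fun (R : realType) (f : R -> R) :=
  exists L : R, forall a b, `|f a - f b| <= L * `|a - b|.

Definition loc_u (R : realType) (th : R) (p q : R * R) : R :=
  cos th * (q.1 - p.1) + sin th * (q.2 - p.2).
Definition loc_v (R : realType) (th : R) (p q : R * R) : R :=
  - sin th * (q.1 - p.1) + cos th * (q.2 - p.2).

Definition bounded_lipschitz_domain (R : realType) (O : set (R * R)) :=
  [/\ open O, connected O, O !=set0,
      (exists M : R, forall p, O p -> `|p.1| <= M /\ `|p.2| <= M) &
      forall p, closure O p -> ~ O p ->
        exists (th r h : R) (f : R -> R),
          [/\ 0 < r /\ 0 < h, lipschitz_fun f, f 0 = 0,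
              (forall u, `|u| < r -> `|f u| < h / 2) &
              forall q, `|loc_u th p q| < r -> `|loc_v th p q| < h ->
                (O q <-> f (loc_u th p q) < loc_v th p q)]].

Definition Linfty (R : realType) (O : set (R * R)) (f : R * R -> R) :=
  measurable_fun O f /\
  exists M : R, {ae leb2 R, forall x, O x -> `|f x| <= M}.

Definition L2 (R : realType) (O : set (R * R)) (f : R * R -> R) :=
  measurable_fun O f /\
  (\int[leb2 R]_(x in O) (((f x) ^+ 2)%:E) < +oo)%E.

Definition pderiv (R : realType) (b : bool) (phi : R * R -> R) : R * R -> R :=
  fun p => if b then derive1 (fun t => phi (p.1, t)) p.2
           else derive1 (fun t => phi (t, p.2)) p.1.

Definition iter_pderiv (R : realType) (s : seq bool) (phi : R * R -> R) :=
  foldr (fun b g => pderiv b g) phi s.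

Definition smooth2 (R : realType) (phi : R * R -> R) :=
  forall s : seq bool,
    continuous (iter_pderiv s phi) /\
    forall p : R * R,
      derivable (fun t => iter_pderiv s phi (t, p.2)) p.1 1 /\
      derivable (fun t => iter_pderiv s phi (p.1, t)) p.2 1.

Definition test_fun (R : realType) (O : set (R * R)) (phi : R * R -> R) :=
  smooth2 phi /\
  exists K : set (R * R), [/\ compact K, K `<=` O &
                              forall p, ~ K p -> phi p = 0].

Definition weak_gradient (R : realType) (O : set (R * R))
    (y : R * R -> 'cV[R]_3) (G : R * R -> 'M[R]_(3, 2)) :=
  forall (i : 'I_3) (j : 'I_2) (phi : R * R -> R), test_fun O phi ->
    (\int[leb2 R]_(x in O) ((y x i 0 * pderiv (j == 1 :> nat) phi x)%:E)
     = - \int[leb2 R]_(x in O) ((G x i j * phi x)%:E))%E.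

Definition H1_with_grad (R : realType) (O : set (R * R))
    (y : R * R -> 'cV[R]_3) (G : R * R -> 'M[R]_(3, 2)) :=
  [/\ forall i : 'I_3, L2 O (fun x => y x i 0),
      forall (i : 'I_3) (j : 'I_2), L2 O (fun x => G x i j) &
      weak_gradient O y G].

Definition fundI (R : realType) (F : 'M[R]_(3, 2)) : 'M[R]_2 := F^T *m F.
Definition Jac (R : realType) (F : 'M[R]_(3, 2)) : R := \det (fundI F).
Definition Cm (R : realType) (m : 'cV[R]_2) (F : 'M[R]_(3, 2)) : R :=
  (m^T *m fundI F *m m) 0 0.

Definition lam (R : realType) (s s0 : R) : R :=
  powR ((s + 1) / (s0 + 1)) (3%:R^-1).

(** Stretching energy density; F of rank 2 iff Jac F > 0. For F of rank < 2
    the density (which contains 1/J) is taken to be +oo. *)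
Definition Wstr (R : realType) (s s0 : R * R -> R) (m : R * R -> 'cV[R]_2)
    (x : R * R) (F : 'M[R]_(3, 2)) : \bar R :=
  if 0 < Jac F then
    (lam (s x) (s0 x) *
       ((Jac F)^-1 + (s x + 1)^-1 *
          (\tr (fundI F) + s0 x * Cm (m x) F + s x * (Jac F / Cm (m x) F)))
     - 3%:R)%:E
  else +oo%E.

Definition Estr (R : realType) (O : set (R * R)) (s s0 : R * R -> R)
    (m : R * R -> 'cV[R]_2) (G : R * R -> 'M[R]_(3, 2)) : \bar R :=
  (\int[leb2 R]_(x in O) Wstr s s0 m x (G x))%E.

Definition gmet (R : realType) (s s0 : R * R -> R) (m mp : R * R -> 'cV[R]_2)
    (x : R * R) : 'M[R]_2 :=
  (lam (s x) (s0 x)) ^+ 2 *: (m x *m (m x)^T)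
  + (lam (s x) (s0 x))^-1 *: (mp x *m (mp x)^T).

Definition unit_vec (R : realType) (v : 'cV[R]_2) := (v^T *m v) 0 0 = 1.

(* Main.v *)
Require Import Defs.
From HB Require Import structures.
From mathcomp Require Import all_boot all_order all_algebra.
From mathcomp Require Import all_classical all_reals all_analysis.
From mathcomp Require Import ring lra.
From mathcomp Require Import measurable_realfun lebesgue_measure lebesgue_integral.
Import Order.TTheory GRing.Theory Num.Theory.
Local Open Scope ring_scope.

Lemma sq0 (R : realFieldType) (x : R) : x ^+ 2 = 0 -> x = 0.
Proof. by move/eqP; rewrite expf_eq0 /= => /eqP. Qed.

Lemma coreP (R : realFieldType) (t q : R) : 0 < t -> 0 < q ->
  0 <= t + q * t^+2 + q^+2 - 3%:R * q * t /\
  (t + q * t^+2 + q^+2 - 3%:R * q * t = 0 -> t = 1 /\ q = 1).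
Proof.
move=> t0 q0.
have [t4|t4] := lerP t 4%:R.
  have E : 4%:R * (t + q * t^+2 + q^+2 - 3%:R * q * t) =
     (2%:R * q + t^+2 - 3%:R * t)^+2 + t * (t - 1)^+2 * (4%:R - t) by ring.
  have h1 : 0 <= t * (t - 1)^+2 * (4%:R - t).
    by apply: mulr_ge0; [apply: mulr_ge0; [exact: ltW|exact: sqr_ge0]|lra].
  have h2 := sqr_ge0 (2%:R * q + t^+2 - 3%:R * t).
  split; first nra.
  move=> P0; rewrite P0 mulr0 in E.
  have e1 : t * (t - 1)^+2 * (4%:R - t) = 0 by nra.
  have /sq0 e2 : (2%:R * q + t^+2 - 3%:R * t)^+2 = 0 by nra.
  move: e1 => /eqP; rewrite !mulf_eq0 => /orP[/orP[/eqP|/eqP t1]|/eqP t4'].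
  - by move=> tt; rewrite tt in t0; rewrite ltxx in t0.
  - move: t1 => /eqP; rewrite orbb subr_eq0 => /eqP t1.
    rewrite t1 in e2; split=> //; lra.
  - have tt : t = 4%:R by lra.
    rewrite tt in e2; nra.
have h : 0 < q * t * (t - 3%:R) by apply: mulr_gt0; [apply: mulr_gt0|lra].
split; first nra.
nra.
Qed.

Section Sc.
Variable R : realFieldType.
Variables m0 m1 p0 p1 x y z s s0 L : R.
Hypothesis hm : m0^+2 + m1^+2 = 1.
Hypothesis hp : p0^+2 + p1^+2 = 1.
Hypothesis hmp : m0 * p0 + m1 * p1 = 0.
Hypothesis hx : 0 <= x.
Hypothesis hz : 0 <= z.
Hypothesis hs : 0 < s + 1.
Hypothesis hs0 : 0 < s0 + 1.
Hypothesis hL : 0 < L.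
Hypothesis hL3 : L^+3 * (s0 + 1) = s + 1.

Let u := m0 * p1 - m1 * p0.
Lemma u2 : u^+2 = 1.
Proof.
have -> : u^+2 = (m0^+2 + m1^+2) * (p0^+2 + p1^+2) - (m0 * p0 + m1 * p1)^+2 by rewrite /u; ring.
by rewrite hm hp hmp; ring.
Qed.
Lemma ep0 : p0 = - (u * m1).
Proof.
have : p0 + u * m1 = p0 * (1 - (m0^+2 + m1^+2)) + m0 * (m0 * p0 + m1 * p1) by rewrite /u; ring.
rewrite hm hmp subrr mulr0 mulr0 addr0 => /eqP; rewrite addr_eq0 => /eqP //.
Qed.
Lemma ep1 : p1 = u * m0.
Proof.
have : p1 - u * m0 = p1 * (1 - (m0^+2 + m1^+2)) + m1 * (m0 * p0 + m1 * p1) by rewrite /u; ring.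
by rewrite hm hmp subrr mulr0 mulr0 addr0 => /eqP; rewrite subr_eq0 => /eqP.
Qed.
Lemma r1 : m0^+2 + p0^+2 = 1.
Proof.
rewrite ep0; have -> : m0 ^+ 2 + (- (u * m1)) ^+ 2 = m0^+2 + u^+2 * m1^+2 by ring.
by rewrite u2 mul1r.
Qed.
Lemma r2 : m1^+2 + p1^+2 = 1.
Proof.
rewrite ep1; have -> : m1 ^+ 2 + (u * m0) ^+ 2 = m1^+2 + u^+2 * m0^+2 by ring.
by rewrite u2 mul1r addrC.
Qed.
Lemma r3 : m0 * m1 + p0 * p1 = 0.
Proof.
rewrite ep0 ep1; have -> : m0 * m1 + - (u * m1) * (u * m0) = m0 * m1 * (1 - u^+2) by ring.
by rewrite u2 subrr mulr0.
Qed.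

Let J := x * z - y^+2.
Let a := m0^+2 * x + 2%:R * m0 * m1 * y + m1^+2 * z.
Let b := m0 * p0 * x + (m0 * p1 + m1 * p0) * y + m1 * p1 * z.
Let c := p0^+2 * x + 2%:R * p0 * p1 * y + p1^+2 * z.

Lemma eJ : a * c - b^+2 = J.
Proof.
have -> : a * c - b^+2 = u^+2 * J by rewrite /a /b /c /J /u; ring.
by rewrite u2 mul1r.
Qed.
Lemma eT : x + z = a + c.
Proof.
have -> : a + c = (m0^+2 + p0^+2) * x + 2%:R * (m0 * m1 + p0 * p1) * y + (m1^+2 + p1^+2) * z
  by rewrite /a /c; ring.
by rewrite r1 r2 r3; ring.
Qed.
Lemma ex : x = m0^+2 * a + 2%:R * m0 * p0 * b + p0^+2 * c.
Proof.
have -> : m0^+2 * a + 2%:R * m0 * p0 * b + p0^+2 * c =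
  (m0^+2 + p0^+2)^+2 * x + 2%:R * (m0^+2 + p0^+2) * (m0 * m1 + p0 * p1) * y + (m0 * m1 + p0 * p1)^+2 * z
  by rewrite /a /b /c; ring.
by rewrite r1 r3; ring.
Qed.
Lemma ez : z = m1^+2 * a + 2%:R * m1 * p1 * b + p1^+2 * c.
Proof.
have -> : m1^+2 * a + 2%:R * m1 * p1 * b + p1^+2 * c =
  (m0 * m1 + p0 * p1)^+2 * x + 2%:R * (m0 * m1 + p0 * p1) * (m1^+2 + p1^+2) * y + (m1^+2 + p1^+2)^+2 * z
  by rewrite /a /b /c; ring.
by rewrite r2 r3; ring.
Qed.
Lemma ey : y = m0 * m1 * a + (m0 * p1 + p0 * m1) * b + p0 * p1 * c.
Proof.
have -> : m0 * m1 * a + (m0 * p1 + p0 * m1) * b + p0 * p1 * c =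
  (m0^+2 + p0^+2) * (m0 * m1 + p0 * p1) * x
  + ((m0^+2 + p0^+2) * (m1^+2 + p1^+2) + (m0 * m1 + p0 * p1)^+2) * y
  + (m0 * m1 + p0 * p1) * (m1^+2 + p1^+2) * z
  by rewrite /a /b /c; ring.
by rewrite r1 r2 r3; ring.
Qed.

Definition Wr := L * (J^-1 + (s+1)^-1 * ((x+z) + s0 * a + s * (J/a))) - 3%:R.

Lemma apos : 0 < J -> 0 < a.
Proof.
move=> J0.
have x0 : 0 < x.
  rewrite lt_neqAle hx andbT; apply/eqP => x0; rewrite /J -x0 mul0r in J0.
  have := sqr_ge0 y; lra.
have E : a * x = (m0 * x + m1 * y)^+2 + m1^+2 * J by rewrite /a /J; ring.
have a0 : 0 <= a.
  have : 0 <= a * x by rewrite E; apply: addr_ge0; [exact: sqr_ge0|apply: mulr_ge0; [exact: sqr_ge0|exact: ltW]].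
  by rewrite pmulr_lge0.
rewrite lt_neqAle a0 andbT; apply/eqP => a0'.
have := eJ; rewrite -a0' mul0r sub0r => h.
have := sqr_ge0 b; lra.
Qed.

Lemma Wr_main : 0 < J -> 0 <= Wr /\
  (Wr = 0 <-> [/\ x = L^+2 * m0^+2 + L^-1 * p0^+2,
                 y = L^+2 * (m0 * m1) + L^-1 * (p0 * p1) &
                 z = L^+2 * m1^+2 + L^-1 * p1^+2]).
Proof.
move=> J0; have a0 := apos J0.
have cE : c = (J + b^+2) / a.
  by rewrite -eJ; field; rewrite gt_eqF.
set t := a / L^+2; set q := J / L.
have t0 : 0 < t by rewrite /t divr_gt0 // exprn_gt0.
have q0 : 0 < q by rewrite /q divr_gt0.
have s0E : s0 = (s + 1) / L^+3 - 1.
  by rewrite -hL3; field; rewrite gt_eqF // exprn_gt0.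
have WE : Wr = (t + q * t^+2 + q^+2 - 3%:R * q * t) / (q * t) + L * b^+2 / ((s+1) * a).
  rewrite /Wr eT cE s0E /t /q; field.
  by rewrite !gt_eqF // ?exprn_gt0.
have [P0 P1] := @coreP _ t q t0 q0.
have B0 : 0 <= L * b^+2 / ((s+1) * a).
  by apply: divr_ge0; [apply: mulr_ge0; [exact: ltW|exact: sqr_ge0]|apply: mulr_ge0; exact: ltW].
have qt0 : 0 < q * t by exact: mulr_gt0.
have A0 : 0 <= (t + q * t^+2 + q^+2 - 3%:R * q * t) / (q * t) by apply: divr_ge0 => //; exact: ltW.
split; first by rewrite WE; exact: addr_ge0.
split.
- move=> W0; rewrite WE in W0.
  have h1 : (t + q * t^+2 + q^+2 - 3%:R * q * t) / (q * t) = 0 by lra.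
  have h2 : L * b^+2 / ((s+1) * a) = 0 by lra.
  move: h1 => /eqP; rewrite mulf_eq0 invr_eq0 (gt_eqF qt0) orbF => /eqP /P1 [t1 q1].
  move: h2 => /eqP; rewrite !mulf_eq0 invr_eq0 !mulf_eq0 (gt_eqF hL) (gt_eqF hs) (gt_eqF a0) /= orbF.
  rewrite orbb => /eqP b0.
  have aE : a = L^+2.
    have -> : a = t * L^+2 by rewrite /t; field; rewrite gt_eqF // exprn_gt0.
    by rewrite t1 mul1r.
  have JE : J = L.
    have -> : J = q * L by rewrite /q; field; rewrite gt_eqF.
    by rewrite q1 mul1r.
  have cE' : c = L^-1 by rewrite cE JE b0 aE; field; rewrite gt_eqF.
  split.
  + by rewrite ex aE b0 cE'; ring.
  + by rewrite ey aE b0 cE'; ring.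
  + by rewrite ez aE b0 cE'; ring.
- case=> xE yE zE.
  have aE : a = L^+2.
    have -> : a = L^+2 * (m0^+2 + m1^+2)^+2 + L^-1 * (m0 * p0 + m1 * p1)^+2
      by rewrite /a xE yE zE; ring.
    by rewrite hm hmp; ring.
  have bE : b = 0.
    have -> : b = L^+2 * (m0^+2 + m1^+2) * (m0 * p0 + m1 * p1) + L^-1 * (m0 * p0 + m1 * p1) * (p0^+2 + p1^+2)
      by rewrite /b xE yE zE; ring.
    by rewrite hmp; ring.
  have cE' : c = L^-1.
    have -> : c = L^+2 * (m0 * p0 + m1 * p1)^+2 + L^-1 * (p0^+2 + p1^+2)^+2
      by rewrite /c xE yE zE; ring.
    by rewrite hmp hp; ring.
  have JE : J = L by rewrite -eJ aE bE cE'; field; rewrite gt_eqF.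
  rewrite /Wr eT aE cE' JE s0E; field.
  by rewrite !gt_eqF // ?exprn_gt0.
Qed.

Lemma J_g : x = L^+2 * m0^+2 + L^-1 * p0^+2 ->
            y = L^+2 * (m0 * m1) + L^-1 * (p0 * p1) ->
            z = L^+2 * m1^+2 + L^-1 * p1^+2 -> J = L.
Proof.
move=> xE yE zE.
have -> : J = L^+2 * L^-1 * u^+2 by rewrite /J xE yE zE /u; ring.
by rewrite u2; field; rewrite gt_eqF.
Qed.
End Sc.

Section M.
Context {R : realType}.

Lemma sum2 (f : 'I_2 -> R) : \sum_(i < 2) f i = f 0 + f 1.
Proof.
rewrite !big_ord_recr big_ord0 /= add0r.
have e0 : (widen_ord (leqnSn 1) ord_max : 'I_2) = 0 by apply/val_inj.
have e4 : (ord_max : 'I_2) = 1 by apply/val_inj.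
by rewrite e0 e4.
Qed.

Lemma sum1 (f : 'I_1 -> R) : \sum_(i < 1) f i = f 0.
Proof. by rewrite big_ord1. Qed.

Lemma sum3 (f : 'I_3 -> R) : \sum_(i < 3) f i = f 0 + f 1 + f 2%:R.
Proof.
rewrite !big_ord_recr big_ord0 /= add0r.
have e0 : (widen_ord (leqnSn 2) (widen_ord (leqnSn 1) ord_max) : 'I_3) = 0 by apply/val_inj.
have e1 : (widen_ord (leqnSn 2) ord_max : 'I_3) = 1 by apply/val_inj.
have e4 : (ord_max : 'I_3) = 2%:R by apply/val_inj.
by rewrite e0 e1 e4.
Qed.

Lemma det2 (A : 'M[R]_2) : \det A = A 0 0 * A 1 1 - A 0 1 * A 1 0.
Proof.
rewrite (expand_det_row _ ord0) sum2 /cofactor.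
rewrite !det_mx11 /= !mxE /=.
have e1 : lift ord0 (0:'I_1) = 1 :> 'I_2 by apply/val_inj.
have e3 : lift (1 : 'I_2) (0:'I_1) = 0 by apply/val_inj.
rewrite e1 e3 expr0 expr1 /=; ring.
Qed.

Lemma tr2 (A : 'M[R]_2) : \tr A = A 0 0 + A 1 1.
Proof. by rewrite /mxtrace sum2. Qed.

Lemma Cm2 (m : 'cV[R]_2) (A : 'M[R]_2) : (m^T *m A *m m) 0 0 =
  m 0 0 * (m 0 0 * A 0 0 + m 1 0 * A 1 0) + m 1 0 * (m 0 0 * A 0 1 + m 1 0 * A 1 1).
Proof.
rewrite !mxE !sum2 !mxE !sum2 !mxE; ring.
Qed.

Lemma uv2 (m : 'cV[R]_2) : unit_vec m -> m 0 0 ^+ 2 + m 1 0 ^+ 2 = 1.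
Proof. by rewrite /unit_vec !mxE sum2 !mxE -!expr2. Qed.

Lemma orth2 (m p : 'cV[R]_2) : (m^T *m p) 0 0 = m 0 0 * p 0 0 + m 1 0 * p 1 0.
Proof. by rewrite !mxE sum2 !mxE. Qed.

Lemma fI (F : 'M[R]_(3,2)) i j : fundI F i j = \sum_(k < 3) F k i * F k j.
Proof. by rewrite /fundI !mxE; apply: eq_bigr => k _; rewrite !mxE. Qed.

Lemma fI_sym (F : 'M[R]_(3,2)) : fundI F 1 0 = fundI F 0 1.
Proof. by rewrite !fI; apply: eq_bigr => k _; rewrite mulrC. Qed.

Lemma fI_ge0 (F : 'M[R]_(3,2)) i : 0 <= fundI F i i.
Proof. by rewrite fI; apply: sumr_ge0 => k _; rewrite -expr2 sqr_ge0. Qed.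

Lemma gE (s s0 : R * R -> R) (m mp : R * R -> 'cV[R]_2) x i j :
  gmet s s0 m mp x i j = lam (s x) (s0 x) ^+ 2 * (m x i 0 * m x j 0)
     + (lam (s x) (s0 x))^-1 * (mp x i 0 * mp x j 0).
Proof. by rewrite /gmet !mxE !sum1 !mxE. Qed.

Lemma mx2P (A B : 'M[R]_2) : A 0 0 = B 0 0 -> A 0 1 = B 0 1 -> A 1 0 = B 1 0 ->
  A 1 1 = B 1 1 -> A = B.
Proof.
move=> h00 h01 h10 h11; apply/matrixP => i j.
have H2 (k : 'I_2) : k = 0 \/ k = 1.
  case: k => [[|[|//]] Hk]; [left|right]; exact/val_inj.
by case: (H2 i) => ->; case: (H2 j) => ->.
Qed.

Lemma lam_pos (s s0 : R) : -1 < s -> -1 < s0 -> 0 < lam s s0 /\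
  lam s s0 ^+ 3 * (s0 + 1) = s + 1.
Proof.
move=> hs hs0; have k0 : 0 < (s + 1) / (s0 + 1) by apply: divr_gt0; lra.
split; first exact: powR_gt0.
rewrite /lam -powR_mulrn ?powR_ge0 // -powRrM mulVf ?pnatr_eq0 // powRr1 ?ltW //.
by rewrite mulfVK // gt_eqF //; lra.
Qed.

End M.

Lemma Wpt (R : realType) (s s0 : R * R -> R) (m mp : R * R -> 'cV[R]_2) x
    (F : 'M[R]_(3,2)) :
  -1 < s x -> -1 < s0 x -> unit_vec (m x) -> unit_vec (mp x) ->
  ((m x)^T *m mp x) 0 0 = 0 ->
  (0 <= Wstr s s0 m x F)%E /\ (Wstr s s0 m x F = 0%E <-> F^T *m F = gmet s s0 m mp x).
Proof.
move=> hs hs0 /uv2 hm /uv2 hp; rewrite orth2 => hmp.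
have [hL hL3] := lam_pos (s x) (s0 x) hs hs0.
set L := lam (s x) (s0 x) in hL hL3 *.
have hx := fI_ge0 F 0.
have Jd : Jac F = fundI F 0 0 * fundI F 1 1 - fundI F 0 1 ^+ 2.
  by rewrite /Jac det2 fI_sym expr2.
have Td : \tr (fundI F) = fundI F 0 0 + fundI F 1 1 by rewrite tr2.
have Cd : Cm (m x) F = m x 0 0 ^+ 2 * fundI F 0 0 + 2%:R * m x 0 0 * m x 1 0 * fundI F 0 1
     + m x 1 0 ^+ 2 * fundI F 1 1.
  by rewrite /Cm Cm2 fI_sym; ring.
have gP : F^T *m F = gmet s s0 m mp x <->
   [/\ fundI F 0 0 = L^+2 * m x 0 0 ^+2 + L^-1 * mp x 0 0 ^+2,
       fundI F 0 1 = L^+2 * (m x 0 0 * m x 1 0) + L^-1 * (mp x 0 0 * mp x 1 0) &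
       fundI F 1 1 = L^+2 * m x 1 0 ^+2 + L^-1 * mp x 1 0 ^+2].
  split.
    move=> E; rewrite /fundI E !gE -/L -!expr2; split => //.
  case=> e00 e01 e11; apply: mx2P; rewrite !gE -/L -/(fundI F) -?expr2 //.
    by rewrite fI_sym e01 [m x 1 0 * _]mulrC [mp x 1 0 * _]mulrC.
have hs1 : 0 < s x + 1 by lra.
rewrite /Wstr.
case: ltP => J0.
  have := @Wr_main R (m x 0 0) (m x 1 0) (mp x 0 0) (mp x 1 0) (fundI F 0 0)
     (fundI F 0 1) (fundI F 1 1) (s x) (s0 x) L hm hp hmp hx hs1 hL hL3.
  rewrite -Jd J0 => /(_ isT) [W0 WP].
  have -> : (L * ((Jac F)^-1 + (s x + 1)^-1 * (\tr (fundI F) + s0 x * Cm (m x) F +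
      s x * (Jac F / Cm (m x) F))) - 3%:R) =
      @Wr R (m x 0 0) (m x 1 0) (fundI F 0 0) (fundI F 0 1) (fundI F 1 1) (s x) (s0 x) L.
    by rewrite /Wr Jd Td Cd.
  split; first by rewrite lee_fin.
  rewrite gP -WP; split; [by case|by move=> ->].
split=> //; split=> // /gP [e00 e01 e11].
have := @J_g R _ _ _ _ _ _ _ _ hm hp hmp hL e00 e01 e11; rewrite -Jd => JL.
by move: J0; rewrite JL leNgt hL.
Qed.

Local Open Scope classical_set_scope.

Lemma measurable_inv (R : realType) : measurable_fun [set: R] (@GRing.inv R).
Proof.
have -> : @GRing.inv R = fun x => if x == 0 then 0 else x^-1.
  by apply/funext => x; case: eqP => // ->; rewrite invr0.
apply: measurable_fun_if => //.
- apply: measurable_realfun.measurable_fun_eqr; [exact: measurable_id|exact: measurable_cst].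
have -> : [set: R] `&` (fun x : R => x == 0) @^-1` [set false] = [set x | x != 0].
  by apply/seteqP; split => x /=; [case=> _ /negbT|move=> /negbTE ->].
apply: measurable_realfun.open_continuous_measurable_fun; first exact: open_neq.
by move=> x; rewrite inE /= => x0; exact: inv_continuous.
Qed.

Section MF.
Context {d} {T : measurableType d} {R : realType} (D : set T).
Lemma mfV (f : T -> R) : measurable_fun D f -> measurable_fun D (fun x => (f x)^-1).
Proof. by move=> mf; apply: (measurableT_comp (measurable_inv R)). Qed.
Lemma mfD (f g : T -> R) : measurable_fun D f -> measurable_fun D g -> measurable_fun D (fun x => f x + g x).
Proof. exact: measurable_realfun.measurable_funD. Qed.
Lemma mfB (f g : T -> R) : measurable_fun D f -> measurable_fun D g -> measurable_fun D (fun x => f x - g x).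
Proof. exact: measurable_realfun.measurable_funB. Qed.
Lemma mfM (f g : T -> R) : measurable_fun D f -> measurable_fun D g -> measurable_fun D (fun x => f x * g x).
Proof. exact: measurable_realfun.measurable_funM. Qed.
Lemma mfN (f : T -> R) : measurable_fun D f -> measurable_fun D (fun x => - f x).
Proof. exact: measurable_realfun.measurable_funN. Qed.
Lemma mfX (f : T -> R) n : measurable_fun D f -> measurable_fun D (fun x => f x ^+ n).
Proof. exact: measurable_realfun.measurable_funX. Qed.
Lemma mfC (c : R) : measurable_fun D (fun _ : T => c).
Proof. exact: measurable_cst. Qed.
Lemma mfP (f : T -> R) p : measurable_fun D f -> measurable_fun D (fun x => powR (f x) p).
Proof. by move=> mf; apply: (measurableT_comp (measurable_realfun.measurable_powR p)). Qed.
End MF.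

Ltac mt := repeat first [ assumption
  | match goal with H : forall i j, measurable_fun _ _ |- _ => apply: H end
  | match goal with H : forall i, measurable_fun _ _ |- _ => apply: H end
  | apply: mfD | apply: mfB | apply: mfM | apply: mfV
  | apply: mfN | apply: mfX | apply: mfP | apply: mfC ].

Lemma mWstr (R : realType) (O : set (R * R)) (s s0 : R * R -> R)
   (m : R * R -> 'cV[R]_2) (G : R * R -> 'M[R]_(3,2)) :
  measurable O -> measurable_fun O s -> measurable_fun O s0 ->
  (forall i, measurable_fun O (fun x => m x i 0)) ->
  (forall i j, measurable_fun O (fun x => G x i j)) ->
  measurable_fun O (fun x => Wstr s s0 m x (G x)).
Proof.
move=> mO ms ms0 mm mG.
have mI : forall i j, measurable_fun O (fun x => fundI (G x) i j).
  move=> i j; under eq_fun do rewrite fI sum3; mt.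
have mJ : measurable_fun O (fun x => Jac (G x)).
  under eq_fun do rewrite /Jac det2; mt.
have mC : measurable_fun O (fun x => Cm (m x) (G x)).
  under eq_fun do rewrite /Cm Cm2; mt.
have mT : measurable_fun O (fun x => \tr (fundI (G x))).
  under eq_fun do rewrite tr2; mt.
rewrite /Wstr; apply: measurable_fun_if => //.
- by apply: measurable_realfun.measurable_fun_ltr => //; exact: measurable_cst.
- apply: (measurable_funS mO (@subIsetl _ _ _)).
  apply/measurable_realfun.measurable_EFinP; rewrite /lam; mt.
Qed.

Import numFieldNormedType.Exports.

Lemma open_meas2 (R : realType) (O : set (R * R)) : open O -> measurable O.
Proof.
move=> oO.
pose box (q : rat * rat * rat) : set (R * R) :=
  `]ratr q.1.1 - ratr q.2, ratr q.1.1 + ratr q.2[%classic `*`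
  `]ratr q.1.2 - ratr q.2, ratr q.1.2 + ratr q.2[%classic.
pose F q := if pselect (box q `<=` O) then box q else set0.
have -> : O = \bigcup_q F q.
  apply/seteqP; split; last first.
    by move=> x [q _]; rewrite /F; case: pselect => // sub; exact: sub.
  move=> x Ox.
  have := oO x Ox; rewrite /interior => /nbhs_ballP [e /= e0 be].
  have : exists r : rat, (0 < (ratr r : R)) && ((ratr r : R) < e / 2%:R).
    have /rat_in_itvoo[r] : (0 : R) < e / 2%:R by rewrite divr_gt0.
    by rewrite in_itv /= => h; exists r.
  move=> [r /andP[r0 re]].
  have /rat_in_itvoo[a] : x.1 - ratr r < x.1 + ratr r by lra.
  rewrite in_itv /= => /andP[a1 a2].
  have /rat_in_itvoo[b] : x.2 - ratr r < x.2 + ratr r by lra.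
  rewrite in_itv /= => /andP[b1 b2].
  have bq : box (a, b, r) `<=` O.
    move=> y [] /=; rewrite !in_itv /= => /andP[y1 y2] /andP[y3 y4].
    apply: be; split => /=; rewrite /ball /=; rewrite ltr_distlC; apply/andP; split; lra.
  exists (a, b, r) => //; rewrite /F; destruct pselect as [hh|nb]; last by exfalso; exact: nb bq.
  by split => /=; rewrite in_itv /=; apply/andP; split; lra.
apply: countable_bigcupT_measurable => // q; rewrite /F; destruct pselect as [hh|nb].
  by apply: measurableX; exact: measurable_itv.
exact: measurable0.
Qed.

Lemma aeS_ {d} {T : measurableType d} {R : realType} (mu : {measure set T -> \bar R})
  (P Q : T -> Prop) :
  (forall x, P x -> Q x) -> almost_everywhere mu P -> almost_everywhere mu Q.
Proof.
move=> PQ [N [mN N0 sN]]; exists N; split => // x /= nQ; apply: sN => /= Px.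
exact: nQ (PQ _ Px).
Qed.

Theorem corollary2p4 (R : realType) (O : set (R * R))
    (s s0 : R * R -> R) (m mp : R * R -> 'cV[R]_2)
    (y : R * R -> 'cV[R]_3) (G : R * R -> 'M[R]_(3, 2)) :
  bounded_lipschitz_domain O ->
  Linfty O s -> Linfty O s0 ->
  (forall x, O x -> -1 < s x) -> (forall x, O x -> -1 < s0 x) ->
  (forall i : 'I_2, measurable_fun O (fun x => m x i 0)) ->
  (forall i : 'I_2, measurable_fun O (fun x => mp x i 0)) ->
  (forall x, O x -> unit_vec (m x)) ->
  (forall x, O x -> unit_vec (mp x)) ->
  (forall x, O x -> ((m x)^T *m mp x) 0 0 = 0) ->
  H1_with_grad O y G ->
  ({ae leb2 R, forall x, O x -> (G x)^T *m G x = gmet s s0 m mp x}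
   <->
   (Estr O s s0 m G = 0%E /\
    forall (z : R * R -> 'cV[R]_3) (Gz : R * R -> 'M[R]_(3, 2)),
      H1_with_grad O z Gz -> (Estr O s s0 m G <= Estr O s s0 m Gz)%E)).
Proof.
move=> [oO _ _ _ _] [ms _] [ms0 _] hs hs0 mm mmp um ump orth [_ hG _].
have mO := @open_meas2 R O oO.
have mG : forall i j, measurable_fun O (fun x => G x i j) by move=> i j; case: (hG i j).
have mW := @mWstr R O s s0 m G mO ms ms0 mm mG.
have Wp x F : O x -> (0 <= Wstr s s0 m x F)%E /\
    (Wstr s s0 m x F = 0%E <-> F^T *m F = gmet s s0 m mp x).
  by move=> Ox; apply: Wpt; auto.
have EE : Estr O s s0 m G = 0%E <->
    ae_eq (leb2 R) O (fun x => Wstr s s0 m x (G x)) (cst 0%E).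
  rewrite -(ae_eq_integral_abs (leb2 R) mO mW) /Estr.
  suff -> : (\int[leb2 R]_(x in O) `|Wstr s s0 m x (G x)| =
             \int[leb2 R]_(x in O) Wstr s s0 m x (G x))%E by [].
  by apply: eq_integral => x /[!inE] Ox; rewrite gee0_abs //; case: (Wp x (G x) Ox).
have minE : Estr O s s0 m G = 0%E -> forall z Gz,
    H1_with_grad O z Gz -> (Estr O s s0 m G <= Estr O s s0 m Gz)%E.
  move=> -> z Gz _; apply: integral_ge0 => x Ox; by case: (Wp x (Gz x) Ox).
split.
- move=> H; suff E0 : Estr O s s0 m G = 0%E by split => //; exact: minE.
  apply/EE; rewrite /ae_eq; move: H; rewrite !nearE; apply: aeS_ => x H Ox; apply/(Wp x (G x) Ox).2; exact: H.
- case=> /EE H _; move: H; rewrite /ae_eq !nearE; apply: aeS_ => x H Ox; apply/(Wp x (G x) Ox).2; exact: H.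
Qed.
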